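(* For every $n\ge 2$, $\sigma(P_n\times P_n)\ge n-1$ and $\sigma(T_n)\ge \lfloor (n-1)/2\rfloor$.
   Context: $P_n\times P_n$ is the grid with vertex set $\{1,\dots,n\}^2$, vertices adjacent iff they differ by $1$ in exactly one coordinate. $T_n$ is the graph whose vertices are the points of the planar triangular lattice lying in a closed equilateral triangle of side length $n-1$ with lattice-point corners (each side contains $n$ vertices), two vertices adjacent iff at Euclidean distance $1$. The stretch of a connected graph $G$ is $\sigma(G)=\min_T\max_{uv\in E(G)} d_T(u,v)$, the minimum over spanning trees $T$ of $G$. *)

(* Defs.v *)
From mathcomp Require Import all_boot.
Set Implicit Arguments. Unset Strict Implicit. Unset Printing Implicit Defensive.

Section Graphs.
Variable V : finType.

Definition srel (T : {set V * V}) : rel V := fun x y => (x, y) \in T.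

(* Distance in the graph with edge relation e: the least k such that there is
   a walk of length k from u to v (equals #|V| if v is unreachable). *)
Definition dist (e : rel V) (u v : V) : nat :=
  find (fun k => [exists p : k.-tuple V, path e u p && (last u p == v)])
       (iota 0 #|V|).

(* A cycle is a
   duplicate-free closed walk c of at least 3 vertices; such c has at most
   #|V| vertices, so quantifying over tuples of size k <= #|V| covers all
   cycles and makes the predicate boolean. *)
Definition spanning_tree (G : rel V) (T : {set V * V}) : bool :=
  [&& [forall x, forall y, srel T x y ==> G x y],
      [forall x, forall y, srel T x y ==> srel T y x],
      [forall x, forall y, connect (srel T) x y]
    & [forall k : 'I_#|V|.+1, forall c : k.-tuple V,
         (uniq c && (2 < size c)) ==> ~~ cycle (srel T) c]].

(* Stretch: min over spanning trees T of max over edges uv of G of d_T(u,v).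
   The default value #|V| of the min is never attained for connected G,
   since every spanning tree gives value <= #|V| - 1. *)
Definition stretch (G : rel V) : nat :=
  \big[minn/#|V|]_(T : {set V * V} | spanning_tree G T)
     \max_(e : V * V | G e.1 e.2) dist (srel T) e.1 e.2.

End Graphs.

(* The grid P_n x P_n on 'I_n * 'I_n (coordinates 0..n-1 instead of 1..n). *)
Definition grid_adj (n : nat) : rel ('I_n * 'I_n) := fun x y =>
  let: (a, b) := (nat_of_ord x.1, nat_of_ord x.2) in
  let: (c, d) := (nat_of_ord y.1, nat_of_ord y.2) in
  ((a == c) && ((b.+1 == d) || (d.+1 == b))) ||
  ((b == d) && ((a.+1 == c) || (c.+1 == a))).

(* Triangular grid T_n: lattice points i*e1 + j*e2 (e1 = (1,0),
   e2 = (1/2, sqrt 3 / 2)) with i, j >= 0, i + j <= n - 1.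
   Unit-distance neighbours differ by +-(1,0), +-(0,1), +-(1,-1). *)
Definition tri_vert (n : nat) := {p : 'I_n * 'I_n | p.1 + p.2 < n}.

Definition tri_adj (n : nat) : rel (tri_vert n) := fun x y =>
  let: (a, b) := (nat_of_ord (val x).1, nat_of_ord (val x).2) in
  let: (c, d) := (nat_of_ord (val y).1, nat_of_ord (val y).2) in
  ((b == d) && ((a.+1 == c) || (c.+1 == a))) ||
  ((a == c) && ((b.+1 == d) || (d.+1 == b))) ||
  ((a.+1 == c) && (d.+1 == b)) || ((c.+1 == a) && (b.+1 == d)).
Arguments grid_adj n : clear implicits.
Arguments tri_adj n : clear implicits.

(* Main.v *)
Require Import Defs.
From mathcomp Require Import all_boot.
From mathcomp Require Import zify.

Set Implicit Arguments. Unset Strict Implicit. Unset Printing Implicit Defensive.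


Definition avoid (V : finType) (t : rel V) (c : V) : rel V :=
  fun x y => [&& t x y, x != c & y != c].
Definition cut (V : finType) (t : rel V) (c w : V) : rel V :=
  fun x y => [&& t x y, ~~ ((x == c) && (y == w)) & ~~ ((x == w) && (y == c))].
Definition comp (V : finType) (t : rel V) (c w : V) : {set V} :=
  [set x | connect (avoid t c) w x].

Lemma path_restr (V : eqType) (e : rel V) (P : pred V) x p :
  path e x p -> all P (x :: p) -> path (fun u v => [&& e u v, P u & P v]) x p.
Proof.
elim: p x => [|y p IH] x //= /andP [exy pp] /and3P [Px Py Pp].
rewrite exy Px Py /=. apply: IH => //=. by rewrite Py.
Qed.

Lemma bridge (V : finType) (t : rel V) (tsym : symmetric t) (tirr : forall x, ~~ t x x)
  (tacyc : forall s : seq V, uniq s -> 2 < size s -> ~~ cycle t s) c w :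
  t c w -> ~~ connect (cut t c w) c w.
Proof.
move=> tcw; apply/negP => /connectP [p pp lp].
case/shortenP: pp lp => p' pp' up' _ lp'.
case: p' pp' up' lp' => [|z [|z' q]] pp' up' lp'.
- rewrite /= in lp'; subst w; by rewrite (negbTE (tirr c)) in tcw.
- rewrite /= in lp'; subst z. by move: pp'; rewrite /= /cut !eqxx /= andbF.
- have := tacyc _ up' isT.
  rewrite (_ : cycle t _ = path t c (rcons [:: z, z' & q] c)) // rcons_path.
  move/negP; apply; apply/andP; split.
  + apply: sub_path pp' => x y /and3P []. done.
  + by rewrite -lp' tsym.
Qed.

Lemma sep2 (V : finType) (t : rel V) (tsym : symmetric t) (tirr : forall x, ~~ t x x)
  (tacyc : forall s : seq V, uniq s -> 2 < size s -> ~~ cycle t s) w z v :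
  t w z -> t w v -> z != v -> ~~ connect (avoid t w) z v.
Proof.
move=> twz twv nzv; apply/negP => H.
have nwv' : w != v.
  by apply/eqP => e; move: twv; rewrite -e (negbTE (tirr w)).
apply: (negP (bridge tsym tirr tacyc twv)).
apply: connect_trans (connect1 (_ : cut t w v w z)) _.
  by rewrite /cut twz eqxx /= nzv /= (negbTE nwv').
apply: connect_sub H => x y /and3P [txy xw yw]; apply: connect1.
by rewrite /cut txy (negbTE xw) (negbTE yw) /= andbF.
Qed.

Lemma avoid_sym (V : finType) (t : rel V) (tsym : symmetric t) c : symmetric (avoid t c).
Proof. move=> x y; by rewrite /avoid tsym (andbC (y != c)). Qed.

Lemma cut_sym (V : finType) (t : rel V) (tsym : symmetric t) c w : symmetric (cut t c w).
Proof.
move=> x y; rewrite /cut tsym; congr (_ && _).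
by rewrite andbC [(y == c) && _]andbC [(y == w) && _]andbC.
Qed.

Lemma stepB (V : finType) (t : rel V) (tconn : forall x y, connect t x y) c x :
  x != c -> exists2 w, t c w & x \in comp t c w.
Proof.
move=> xc; have /connectP [p pp lp] := tconn c x.
case/shortenP: pp lp => p' pp' up' _ lp'.
case: p' pp' up' lp' => [|w q] pp' up' lp'.
  by rewrite /= in lp'; rewrite lp' eqxx in xc.
move: pp' => /= /andP [tcw pq]; exists w => //.
rewrite inE; apply/connectP; exists q => //.
have := path_restr (P := fun y => y != c) pq; apply.
apply/allP => y yin; apply/eqP => e; move: up'; rewrite /= -e.
by move: yin; rewrite in_cons => ->.
Qed.

Lemma path_avoid_all (V : finType) (t : rel V) c w p :
  path (avoid t c) w p -> w != c -> all (fun y => y != c) (w :: p).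
Proof.
elim: p w => [|y p IH] w /=; first by move=> _ ->.
move=> /andP [/and3P [_ _ yc] pp] ->; rewrite /=; exact: IH.
Qed.

Lemma c_notin (V : finType) (t : rel V) (tirr : forall x, ~~ t x x) c w :
  t c w -> c \notin comp t c w.
Proof.
move=> tcw; have wc : w != c by apply/eqP => e; move: tcw; rewrite e (negbTE (tirr c)).
rewrite inE; apply/negP => /connectP [p pp lp].
have := path_avoid_all pp wc; move/allP/(_ (last w p) (mem_last w p)).
by rewrite -lp eqxx.
Qed.

Lemma disj (V : finType) (t : rel V) (tsym : symmetric t) (tirr : forall x, ~~ t x x)
  (tacyc : forall s : seq V, uniq s -> 2 < size s -> ~~ cycle t s) c w x :
  t c w -> x \in comp t c w -> x \in comp t w c -> False.
Proof.
rewrite !inE => tcw H1 H2.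
have H1' : connect (cut t c w) w x.
  apply: connect_sub H1 => u v /and3P [tuv uc vc]; apply: connect1.
  by rewrite /cut tuv (negbTE uc) (negbTE vc) /= andbF.
have H2' : connect (cut t c w) c x.
  apply: connect_sub H2 => u v /and3P [tuv uw vw]; apply: connect1.
  by rewrite /cut tuv (negbTE uw) (negbTE vw) /= andbF.
apply: (negP (bridge tsym tirr tacyc tcw)).
apply: connect_trans H2' _.
by rewrite (sym_connect_sym (cut_sym tsym c w)).
Qed.

Lemma sub_lt (V : finType) (t : rel V) (tsym : symmetric t) (tirr : forall x, ~~ t x x)
  (tacyc : forall s : seq V, uniq s -> 2 < size s -> ~~ cycle t s) c w z :
  t c w -> t w z -> z != c -> #|comp t w z| < #|comp t c w|.
Proof.
move=> tcw twz zc.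
have wc : w != c by apply/eqP => e; move: tcw; rewrite e (negbTE (tirr c)).
have nzc := sep2 tsym tirr tacyc twz (_ : t w c) zc.
have {}nzc : ~~ connect (avoid t w) z c by apply: nzc; rewrite tsym.
apply: proper_card; apply/properP; split.
  apply/subsetP => x; rewrite !inE => /connectP [p pp lp].
  have allc : all (fun y => y != c) (z :: p).
    apply/allP => y yin; apply/eqP => e; subst y.
    by rewrite (path_connect pp yin) in nzc.
  have := path_restr pp allc => pp2.
  apply: connect_trans (connect1 (_ : avoid t c w z)) _.
    by rewrite /avoid twz wc zc.
  apply/connectP; exists p => //.
  apply: sub_path pp2 => u v /and3P [/and3P [tuv _ _] uc vc].
  by rewrite /avoid tuv uc vc.
exists w; first by rewrite inE connect0.
exact: c_notin.
Qed.

Lemma separate (V : finType) (G t : rel V) (tsym : symmetric t) (tirr : forall x, ~~ t x x)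
  (tacyc : forall s : seq V, uniq s -> 2 < size s -> ~~ cycle t s)
  (tconn : forall x y, connect t x y) (A : V -> {set V}) (v0 : V)
  (Anc : forall c, c \notin A c)
  (Aint : forall c c', exists x, (x \in A c) && (x \in A c'))
  (Acon : forall c x y, x \in A c -> y \in A c ->
     connect (fun u v => [&& G u v, u \in A c & v \in A c]) x y) :
  exists c x y, [&& G x y, x \in A c, y \in A c & ~~ connect (avoid t c) x y].
Proof.
case: (boolP [exists c, exists x, exists y,
   [&& G x y, x \in A c, y \in A c & ~~ connect (avoid t c) x y]]).
  by move/existsP => [c /existsP [x /existsP [y H]]]; exists c, x, y.
rewrite negb_exists => /forallP H; exfalso.
have H' : forall c x y, G x y -> x \in A c -> y \in A c -> connect (avoid t c) x y.
  move=> c x y gxy xa ya; move: (H c); rewrite negb_exists => /forallP /(_ x).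
  rewrite negb_exists => /forallP /(_ y).
  by rewrite gxy xa ya /= negbK.
have one : forall c, exists2 w, t c w & A c \subset comp t c w.
  move=> c; case: (Aint c c) => x0 /andP [x0A _].
  have x0c : x0 != c by apply/eqP => e; move: x0A; rewrite e; apply/negP; exact: Anc.
  case: (stepB tconn x0c) => w tcw x0w; exists w => //.
  apply/subsetP => y yA; rewrite inE.
  have cy : connect (avoid t c) x0 y.
    apply: connect_sub (Acon c x0 y x0A yA) => u v /and3P [g ua va].
    exact: H'.
  rewrite inE in x0w; exact: connect_trans x0w cy.
case: (one v0) => w0 t0 s0.
pose P := [pred pr : V * V | t pr.1 pr.2 && (A pr.1 \subset comp t pr.1 pr.2)].
have P0 : P (v0, w0) by rewrite /= t0 s0.
case: (arg_minnP (fun pr : V * V => #|comp t pr.1 pr.2|) P0) => [[c w]] /= /andP [tcw sAc] minp.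
case: (one w) => z twz sAw.
case: (eqVneq z c) => [ezc | nzc].
  subst z; case: (Aint c w) => x /andP [xc xw].
  exact: (disj tsym tirr tacyc tcw (subsetP sAc x xc) (subsetP sAw x xw)).
have := minp (w, z); rewrite /= twz sAw => /(_ isT).
have := sub_lt tsym tirr tacyc tcw twz nzc.
by move=> lt le; rewrite leqNgt lt in le.
Qed.

Lemma lip_path (V : eqType) (e : rel V) (h : V -> nat)
  (Lip : forall u v, e u v -> h u <= (h v).+1 /\ h v <= (h u).+1) x p :
  path e x p -> h x <= size p + h (last x p) /\ h (last x p) <= size p + h x.
Proof.
elim: p x => [|y p IH] x /=; first by move=> _; lia.
move=> /andP [exy pp]; have [Ha Hb] := IH y pp; have [L1 L2] := Lip x y exy; lia.
Qed.

Lemma walk_via (V : finType) (t : rel V) (h : V -> nat) c x y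
  (Lip : forall u v, t u v -> h u <= (h v).+1 /\ h v <= (h u).+1)
  (h0 : h c = 0) (xc : x != c) (nc : ~~ connect (avoid t c) x y) p :
  path t x p -> last x p = y -> h x + h y <= size p.
Proof.
move=> pp lp.
have cin : c \in x :: p.
  apply: contraNT nc => cn; apply/connectP; exists p => //.
  apply: path_restr pp _.
  by apply/allP => z zin; apply/eqP => ezc; move: cn; rewrite -ezc zin.
move: cin; rewrite in_cons eq_sym (negbTE xc) /= => cp.
case/path.splitP: cp pp lp => p1 p2.
rewrite cat_path last_cat last_rcons => /andP [pp1 pp2] lp.
rewrite size_cat size_rcons.
have [A1 _] := lip_path Lip pp1; rewrite last_rcons h0 size_rcons in A1.
have [_ B2] := lip_path Lip pp2; rewrite lp h0 in B2.
rewrite !addn0 in A1 B2; exact: leq_add A1 B2.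
Qed.

Lemma dist_lb (V : finType) (e : rel V) u v b :
  b <= #|V| -> (forall p, path e u p -> last u p = v -> b <= size p) -> b <= dist e u v.
Proof.
move=> hb H; rewrite /dist.
set d := find _ _; case: (ltnP d #|V|) => [lt|ge]; last exact: leq_trans hb ge.
move: lt; rewrite /d -{2}(size_iota 0 #|V|) -has_find => lt; have := nth_find 0 lt.
move/existsP => [p /andP [pp /eqP lp]].
have := H p pp lp; rewrite size_tuple nth_iota ?add0n //.
by rewrite has_find size_iota in lt.
Qed.

Lemma st_props (V : finType) (G : rel V) (T : {set V * V}) :
  spanning_tree G T ->
  [/\ (forall x y, srel T x y -> G x y), symmetric (srel T),
      (forall x y, connect (srel T) x y) &
      (forall s : seq V, uniq s -> 2 < size s -> ~~ cycle (srel T) s)].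
Proof.
case/and4P => /forallP H1 /forallP H2 /forallP H3 /forallP H4; split.
- by move=> x y; move: (H1 x) => /forallP /(_ y) /implyP.
- move=> x y; apply/idP/idP.
    by move: (H2 x) => /forallP /(_ y) /implyP.
  by move: (H2 y) => /forallP /(_ x) /implyP.
- by move=> x y; move: (H3 x) => /forallP /(_ y).
- move=> s us ss.
  have sz : size s < #|V|.+1 by rewrite ltnS -(card_uniqP us); exact: max_card.
  move: (H4 (Ordinal sz)) => /forallP /(_ (in_tuple s)) /implyP.
  by rewrite /= us ss => /(_ isT).
Qed.

Lemma generic (V : finType) (G : rel V) (b : nat) (h : V -> V -> nat) (A : V -> {set V})
  (v0 : V)
  (Girr : forall x, ~~ G x x)
  (Lip : forall c u v, G u v -> h c u <= (h c v).+1 /\ h c v <= (h c u).+1)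
  (h0 : forall c, h c c = 0)
  (hpos : forall c x, x \in A c -> 0 < h c x)
  (hb : forall c x, x \in A c -> b <= 2 * h c x)
  (Aint : forall c c', exists x, (x \in A c) && (x \in A c'))
  (Acon : forall c x y, x \in A c -> y \in A c ->
     connect (fun u v => [&& G u v, u \in A c & v \in A c]) x y)
  (bV : b <= #|V|) :
  b <= stretch G.
Proof.
rewrite /stretch; apply: (big_ind (fun m => b <= m)) => //.
  by move=> m1 m2; rewrite leq_min => -> ->.
move=> T sT; have [tG tsym tconn tacyc] := st_props sT.
have tirr : forall x, ~~ srel T x x by move=> x; apply: contra (tG x x) (Girr x).
have Anc : forall c, c \notin A c.
  by move=> c; apply/negP => cA; have := hpos c c cA; rewrite h0.
have [c [x [y /and4P [gxy xA yA nc]]]] := separate tsym tirr tacyc tconn v0 Anc Aint Acon.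
apply: leq_trans (leq_bigmax_cond (x, y) gxy).
apply: dist_lb => // p pp lp.
have xc : x != c by apply/eqP => e; have := hpos c x xA; rewrite e h0.
have := walk_via (h := h c) (fun u v tuv => Lip c u v (tG u v tuv)) (h0 c) xc nc pp lp.
have := hb c x xA; have := hb c y yA; lia.
Qed.


Definition ad (a b : nat) := (a - b) + (b - a).

Lemma line_connect (V : finType) (R : rel V) (f : nat -> V) L :
  (forall i, i < L -> R (f i) (f i.+1)) -> forall i, i <= L -> connect R (f 0) (f i).
Proof.
move=> H; elim=> [|i IH] Hi; first exact: connect0.
exact: connect_trans (IH (ltnW Hi)) (connect1 (H i Hi)).
Qed.

Lemma conn_via (V : finType) (R : rel V) (Rs : symmetric R) a b x :
  connect R a b -> connect R a x -> connect R b x.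
Proof. move=> ab ax; apply: connect_trans _ ax; by rewrite (sym_connect_sym Rs). Qed.



Definition gX m (a : 'I_m.+2) : 'I_m.+2 := if 2 * a < m.+2 then ord_max else ord0.
Definition gh m (c v : 'I_m.+2 * 'I_m.+2) := ad v.1 c.1 + ad v.2 c.2.
Definition gA m (c : 'I_m.+2 * 'I_m.+2) : {set 'I_m.+2 * 'I_m.+2} :=
  [set v | (v.1 == gX c.1) || (v.2 == gX c.2)].

Lemma gX_far m (a : 'I_m.+2) : m.+1 <= 2 * ad (gX a) a.
Proof. rewrite /gX /ad; case: ifP => H /=; lia. Qed.

Lemma grid_sym n : symmetric (grid_adj n).
Proof. move=> u v; rewrite /grid_adj /=; apply/idP/idP; lia. Qed.

Lemma grid_part m : m.+1 <= stretch (grid_adj m.+2).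
Proof.
apply: (@generic _ _ _ (@gh m) (@gA m) (ord0, ord0)).
- move=> x; rewrite /grid_adj /=; lia.
- move=> c u v; rewrite /grid_adj /gh /ad /=; lia.
- move=> c; rewrite /gh /ad; lia.
- move=> c x; rewrite inE /gh => /orP [/eqP e|/eqP e];
    [have := gX_far c.1 | have := gX_far c.2]; rewrite -e; move: (ad x.1 c.1) (ad x.2 c.2); lia.
- move=> c x; rewrite inE /gh => /orP [/eqP e|/eqP e];
    [have := gX_far c.1 | have := gX_far c.2]; rewrite -e; move: (ad x.1 c.1) (ad x.2 c.2); lia.
- move=> c c'; exists (gX c.1, gX c'.2); by rewrite !inE !eqxx /= orbT.
- move=> c x y xA yA.
  set R := fun u v => _.
  have Rs : symmetric R.
    by move=> u v; rewrite /R grid_sym; case: (u \in gA c); case: (v \in gA c).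
  suff base : forall z, z \in gA c -> connect R (gX c.1, gX c.2) z.
    by apply: (conn_via Rs); apply: base.
  have col : forall j : 'I_m.+2, connect R (gX c.1, inord 0) (gX c.1, j).
    move=> j; have := @line_connect _ R (fun i => (gX c.1, inord i)) m.+1 _ j.
    rewrite inord_val; apply; last by rewrite -ltnS.
    move=> i lti; rewrite /R /grid_adj !inE /= !eqxx /= !inordK //; lia.
  have row : forall j : 'I_m.+2, connect R (inord 0, gX c.2) (j, gX c.2).
    move=> j; have := @line_connect _ R (fun i => (inord i, gX c.2)) m.+1 _ j.
    rewrite inord_val; apply; last by rewrite -ltnS.
    move=> i lti; rewrite /R /grid_adj !inE /= !eqxx /= !inordK ?orbT //; lia.
  case=> z1 z2; rewrite inE /= => /orP [/eqP -> | /eqP ->].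
    by apply: (conn_via Rs (a := (gX c.1, inord 0))); apply: col.
  by apply: (conn_via Rs (a := (inord 0, gX c.2))); apply: row.
- rewrite card_prod card_ord; nia.
Qed.


Definition t0 m : tri_vert m.+2 := exist _ (ord0, ord0) isT.
Definition mk m (i j : nat) : tri_vert m.+2 := insubd (t0 m) (inord i, inord j).
Definition ta m (v : tri_vert m.+2) : nat := (val v).1.
Definition tb m (v : tri_vert m.+2) : nat := (val v).2.

Lemma tbound m (v : tri_vert m.+2) : ta v + tb v < m.+2.
Proof. exact: (valP v). Qed.

Lemma mkE m i j : i + j < m.+2 -> ta (mk m i j) = i /\ tb (mk m i j) = j.
Proof.
move=> H; rewrite /ta /tb /mk insubdK /= ?inordK //; try lia.
by rewrite unfold_in /= !inordK //; lia.
Qed.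

Lemma mk_eta m (v : tri_vert m.+2) : v = mk m (ta v) (tb v).
Proof. by rewrite /mk /ta /tb !inord_val -surjective_pairing valKd. Qed.

Lemma tri_adjE m (u v : tri_vert m.+2) : tri_adj m.+2 u v =
  ((tb u == tb v) && (((ta u).+1 == ta v) || ((ta v).+1 == ta u))) ||
  ((ta u == ta v) && (((tb u).+1 == tb v) || ((tb v).+1 == tb u))) ||
  (((ta u).+1 == ta v) && ((tb v).+1 == tb u)) || (((ta v).+1 == ta u) && ((tb u).+1 == tb v)).
Proof. by []. Qed.

Definition th m (c v : tri_vert m.+2) :=
  maxn (maxn (ad (ta v) (ta c)) (ad (tb v) (tb c))) (ad (ta v + tb v) (ta c + tb c)).
Definition sel m (c : tri_vert m.+2) : nat :=
  if (tb c <= ta c) && (m.+1 - ta c - tb c <= ta c) then 0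
  else if m.+1 - ta c - tb c <= tb c then 1 else 2.
Definition side m (k : nat) (v : tri_vert m.+2) : bool :=
  if k == 0 then ta v == 0 else if k == 1 then tb v == 0 else ta v + tb v == m.+1.
Definition tA m (c : tri_vert m.+2) : {set tri_vert m.+2} := [set v | side (sel c) v].

Lemma tri_far m (c x : tri_vert m.+2) : x \in tA c ->
  (m.+1)./2 <= 2 * th c x /\ 0 < th c x.
Proof.
have T1 : ad (ta x) (ta c) <= th c x by rewrite /th !leq_max leqnn.
have T2 : ad (tb x) (tb c) <= th c x by rewrite /th !leq_max leqnn orbT.
have T3 : ad (ta x + tb x) (ta c + tb c) <= th c x by rewrite /th !leq_max leqnn orbT.
move: T1 T2 T3 (tbound c) (tbound x); rewrite inE /side /sel /ad -divn2.
move: (th c x) (ta c) (tb c) (ta x) (tb x) => t p q a b.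
case H1: ((q <= p) && (m.+1 - p - q <= p)); [|case H2: (m.+1 - p - q <= q)] => /=.
- move=> T1 _ _ B1 _ /eqP a0; subst a; move: H1 => /andP [h1 h2]; lia.
- move=> _ T2 _ B1 _ /eqP b0; subst b; move: H1 => /negbT; rewrite negb_and -!ltnNge => h1; lia.
- move=> _ _ T3 B1 _ /eqP ab; rewrite ab in T3; move: H1 => /negbT; rewrite negb_and -!ltnNge => h1.
  move: H2 => /negbT; rewrite -ltnNge => h2; lia.
Qed.

Lemma ad_lip x y p : x <= y.+1 -> y <= x.+1 -> ad x p <= (ad y p).+1.
Proof. rewrite /ad; lia. Qed.

Lemma max3_lip X Y Z X' Y' Z' : X <= X'.+1 -> Y <= Y'.+1 -> Z <= Z'.+1 ->
  maxn (maxn X Y) Z <= (maxn (maxn X' Y') Z').+1.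
Proof.
move=> h1 h2 h3; rewrite !geq_max; apply/andP; split; [apply/andP; split|].
- apply: leq_trans h1 _; by rewrite ltnS !leq_max leqnn.
- apply: leq_trans h2 _; by rewrite ltnS !leq_max leqnn orbT.
- apply: leq_trans h3 _; by rewrite ltnS !leq_max leqnn orbT.
Qed.

Lemma tri_steps m (u v : tri_vert m.+2) : tri_adj m.+2 u v ->
  [/\ ta u <= (ta v).+1, ta v <= (ta u).+1, tb u <= (tb v).+1 & tb v <= (tb u).+1] /\
  (ta u + tb u <= (ta v + tb v).+1 /\ ta v + tb v <= (ta u + tb u).+1).
Proof.
rewrite tri_adjE; move: (ta u) (tb u) (ta v) (tb v) => a b a' b'.
move=> H; split; [split|split]; lia.
Qed.

Lemma tri_lip m (c u v : tri_vert m.+2) : tri_adj m.+2 u v ->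
  th c u <= (th c v).+1 /\ th c v <= (th c u).+1.
Proof.
case/tri_steps => [[h1 h2 h3 h4] [h5 h6]]; split; apply: max3_lip; exact: ad_lip.
Qed.

Lemma tri_irr m (v : tri_vert m.+2) : ~~ tri_adj m.+2 v v.
Proof. rewrite tri_adjE; move: (ta v) (tb v) => a b; lia. Qed.

Lemma tri_sym m : symmetric (tri_adj m.+2).
Proof.
move=> u v; rewrite !tri_adjE.
move: (ta u) (tb u) (ta v) (tb v) => a b a' b'; apply/idP/idP; lia.
Qed.

Lemma sel_le m (c : tri_vert m.+2) : sel c <= 2.
Proof. rewrite /sel; case: ifP => //; case: ifP => //. Qed.

Lemma corner_in m (c : tri_vert m.+2) :
  [/\ (mk m 0 0 \in tA c) = (sel c != 2), (mk m m.+1 0 \in tA c) = (sel c != 0)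
    & (mk m 0 m.+1 \in tA c) = (sel c != 1)].
Proof.
have [a0 b0] := @mkE m 0 0 isT.
have [a1 b1] : ta (mk m m.+1 0) = m.+1 /\ tb (mk m m.+1 0) = 0 by apply: mkE; rewrite addn0.
have [a2 b2] : ta (mk m 0 m.+1) = 0 /\ tb (mk m 0 m.+1) = m.+1 by apply: mkE.
rewrite !inE /side a0 b0 a1 b1 a2 b2.
have := sel_le c; case: (sel c) => [|[|[|k]]] //= _; split => //; lia.
Qed.

Lemma tri_int m (c c' : tri_vert m.+2) : exists x, (x \in tA c) && (x \in tA c').
Proof.
have [e0 e1 e2] := corner_in c; have [e0' e1' e2'] := corner_in c'.
have := sel_le c; have := sel_le c'.
case E0: ((sel c != 2) && (sel c' != 2)).
  by move=> _ _; exists (mk m 0 0); rewrite e0 e0'.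
case E1: ((sel c != 0) && (sel c' != 0)).
  by move=> _ _; exists (mk m m.+1 0); rewrite e1 e1'.
move=> h1 h2; exists (mk m 0 m.+1); rewrite e2 e2'.
move: E0 E1 h1 h2; move: (sel c) (sel c') => s1 s2; lia.
Qed.

Lemma line_all (V : finType) (R : rel V) (Rs : symmetric R) (f : nat -> V) L (P : pred V) :
  (forall i, i < L -> R (f i) (f i.+1)) -> (forall x, P x -> exists2 i, i <= L & x = f i) ->
  forall x y, P x -> P y -> connect R x y.
Proof.
move=> st su x y px py; case: (su x px) => i li ->; case: (su y py) => j lj ->.
by apply: (conn_via Rs (a := f 0)); apply: (line_connect st).
Qed.

Definition tR m k : rel (tri_vert m.+2) := fun u v =>
  [&& tri_adj m.+2 u v, u \in [set v | side k v] & v \in [set v | side k v]].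

Lemma side_con m k (x y : tri_vert m.+2) : side k x -> side k y -> connect (@tR m k) x y.
Proof.
have Rs : symmetric (@tR m k).
  by move=> u v; rewrite /tR tri_sym; case: (u \in _); case: (v \in _).
have bx := tbound x.
case: (eqVneq k 0) => [k0|k0]; [|case: (eqVneq k 1) => [k1|k1]].
- apply: (line_all Rs (f := fun i => mk m 0 i) (L := m.+1) (P := side k)).
    move=> i li; have [a1 b1] := @mkE m 0 i (ltnW li); have [a2 b2] := @mkE m 0 i.+1 li.
    by rewrite /tR tri_adjE !inE /side k0 /= a1 b1 a2 b2 !eqxx /= ?orbT.
  move=> z; rewrite /side k0 /= => /eqP z0; exists (tb z); first by have := tbound z; lia.
  by rewrite {1}(mk_eta z) z0.
- apply: (line_all Rs (f := fun i => mk m i 0) (L := m.+1) (P := side k)).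
    move=> i li; have hh : i + 0 < m.+2 by lia. have [a1 b1] := mkE hh.
    have hh2 : i.+1 + 0 < m.+2 by lia. have [a2 b2] := mkE hh2.
    by rewrite /tR tri_adjE !inE /side k1 /= a1 b1 a2 b2 !eqxx /= ?orbT.
  move=> z; rewrite /side k1 /= => /eqP z0; exists (ta z); first by have := tbound z; lia.
  by rewrite {1}(mk_eta z) z0.
- apply: (line_all Rs (f := fun i => mk m i (m.+1 - i)) (L := m.+1) (P := side k)).
    move=> i li; have hh : i + (m.+1 - i) < m.+2 by lia. have [a1 b1] := mkE hh.
    have hh2 : i.+1 + (m.+1 - i.+1) < m.+2 by lia. have [a2 b2] := mkE hh2.
    rewrite /tR tri_adjE !inE /side (negbTE k0) (negbTE k1) /= a1 b1 a2 b2.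
    move: li; clear; lia.
  move=> z; rewrite /side (negbTE k0) (negbTE k1) /= => /eqP z0; exists (ta z).
    by have := tbound z; lia.
  rewrite {1}(mk_eta z); congr (mk m _ _); lia.
Qed.

Lemma tri_inj m : injective (fun i : 'I_m.+2 => mk m 0 i).
Proof.
move=> i j; have hi : 0 + i < m.+2 by rewrite add0n.
have hj : 0 + j < m.+2 by rewrite add0n.
move/(congr1 (@tb m)); rewrite (mkE hi).2 (mkE hj).2; exact: ord_inj.
Qed.

Lemma tri_part m : (m.+1)./2 <= stretch (tri_adj m.+2).
Proof.
apply: (@generic _ _ _ (@th m) (@tA m) (mk m 0 0)).
- exact: tri_irr.
- by move=> c u v H; apply: tri_lip.
- by move=> c; rewrite /th /ad !subnn.
- by move=> c x /tri_far [].
- by move=> c x /tri_far [].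
- exact: tri_int.
- move=> c x y; rewrite !inE => hx hy; exact: side_con hx hy.
- have := leq_card _ (@tri_inj m); rewrite card_ord; lia.
Qed.


Theorem mainTheorem8 (n : nat) :
  2 <= n ->
  n - 1 <= stretch (grid_adj n) /\ (n - 1)./2 <= stretch (tri_adj n).
Proof.
case: n => [|[|m]] // _.
have -> : m.+2 - 1 = m.+1 by rewrite subn1.
split; [exact: grid_part | exact: tri_part].
Qed.
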